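(* Let $\mathcal{G}=(G,o,R_1,\ldots,R_n)$ be a functional Menger system of rank $n$ and let $H$ be a nonempty subset of $G$. Then $H$ is a stabilizer of $\mathcal{G}$ if and only if $H$ is a quasi-stable, $l$-unitary normal $v$-complex such that $R_iH\subseteq H$ for every $i\in\{1,\ldots,n\}$ and for every $m\in\mathbb N=\{0,1,2,\ldots\}$ the condition $(A_m)$ holds, where $(A_m)$ states: for all $x,y,u\in G$, $\bar w\in G^n$, $i\in\{1,\ldots,n\}$, if $x=y[R_1x\ldots R_nx]$, $x\in C_H^m(H)$ and $u[\bar w\,|_iy]\in H$, then $u[\bar w\,|_ix]\in H$.
   Context: A functional Menger system of rank $n$ is a nonempty set $G$ with an $(n+1)$-ary operation $o\colon(x_0,x_1,\ldots,x_n)\mapsto x_0[x_1\ldots x_n]$ and unary operations $R_1,\ldots,R_n$ satisfying, for all $i,k\in\{1,\ldots,n\}$ and all elements: (A1) $x[y_1\ldots y_n][z_1\ldots z_n]=x[y_1[z_1\ldots z_n]\ldots y_n[z_1\ldots z_n]]$; (A2) $x[R_1x\ldots R_nx]=x$; (A3) $x[\bar u\,|_iz][R_1y\ldots R_ny]=x[\bar u\,|_iz[R_1y\ldots R_ny]]$; (A4) $R_ix[R_1y\ldots R_ny]=(R_ix)[R_1y\ldots R_ny]$; (A5) $x[R_1y\ldots R_ny][R_1z\ldots R_nz]=x[R_1z\ldots R_nz][R_1y\ldots R_ny]$; (A6) $R_ix[y_1\ldots y_n]=R_i(R_kx)[y_1\ldots y_n]$; (A7) $(R_ix)[y_1\ldots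 y_n]=y_i[R_1(x[y_1\ldots y_n])\ldots R_n(x[y_1\ldots y_n])]$. Here $x[\bar u\,|_iz]$ denotes $x[u_1\ldots u_{i-1}\,z\,u_{i+1}\ldots u_n]$, and $R_ix[\ldots]$ means $R_i(x[\ldots])$. For a set $A$, $\mathcal F(A^n,A)$ is the set of partial maps $A^n\to A$. The Menger composition $f[g_1\ldots g_n]$ is the partial function $\bar a\mapsto f(g_1(\bar a),\ldots,g_n(\bar a))$ (defined exactly when the right side is defined), and $\mathcal R_if$ is the partial function with the same domain as $f$ given by $(a_1,\ldots,a_n)\mapsto a_i$. A representation of $\mathcal G$ by $n$-place functions on a set $A$ is a map $P\colon G\to\mathcal F(A^n,A)$ with $P(x[y_1\ldots y_n])=P(x)[P(y_1)\ldots P(y_n)]$ and $P(R_ix)=\mathcal R_iP(x)$. A nonempty $H\subseteq G$ is a stabilizer of $\mathcal G$ if there exist such a representation $P$ on some set $A$ and a point $a\in A$ with $H=\{g\in G: P(g)(a,\ldots,a)=a\}$. $T_n(G)$ is the smallest set of maps $G\to G$ containing the identity and closed under $t\mapsto (x\mapsto a[\bar b\,|_it(x)])$ and $t\mapsto(x\mapsto R_it(x))$ for all $a\in G$, $\bar b\in G^n$, $i$. A nonempty $H\subseteq G$ is quasi-stable if $x\in H\Rightarrow x[x\ldots x]\in H$; $l$-unitary if $x[y\ldots y]\in H$ and $y\in H$ imply $x\in H$; a normal $v$-complex if $x,y\in H$ and $t(x)\in H$ imply $t(y)\in H$ for all $x,y\in G$, $t\in T_n(G)$. Write $x\le y$ iff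 $x=y[R_1x\ldots R_nx]$. For $X\subseteq G$, let $C_H(X)$ be the set of all $c\in G$ for which there exist $a,b\in G$ and $t\in T_n(G)$ with ($a\le b$ or $a,b\in H$), $t(a)[R_1c\ldots R_nc]=t(a)$, $a\in X$ and $t(b)\in X$. Put $C_H^0(X)=X$ and $C_H^{m+1}(X)=C_H(C_H^m(X))$. *)

(* Defs.v *)
From mathcomp Require Import all_boot.
Set Implicit Arguments. Unset Strict Implicit. Unset Printing Implicit Defensive.

Section Menger.
Variable n : nat.

(** Vectors of length n are finite functions on 'I_n (indices 0..n-1
    correspond to the paper's 1..n). *)
Definition upd (T : Type) (u : {ffun 'I_n -> T}) (i : 'I_n) (z : T) : {ffun 'I_n -> T} :=
  [ffun j => if j == i then z else u j].

Variable G : Type.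
(** o x y  is  x[y_1 ... y_n];  R i x  is  R_i x. *)
Variable o : G -> {ffun 'I_n -> G} -> G.
Variable R : 'I_n -> G -> G.

Definition Rs (y : G) : {ffun 'I_n -> G} := [ffun k => R k y].

Record menger_system : Prop := {
  A1 : forall x y z, o (o x y) z = o x [ffun j => o (y j) z];
  A2 : forall x, o x (Rs x) = x;
  A3 : forall x u i z y, o (o x (upd u i z)) (Rs y) = o x (upd u i (o z (Rs y)));
  A4 : forall i x y, R i (o x (Rs y)) = o (R i x) (Rs y);
  A5 : forall x y z, o (o x (Rs y)) (Rs z) = o (o x (Rs z)) (Rs y);
  A6 : forall i k x y, R i (o x y) = R i (o (R k x) y);
  A7 : forall i x y, o (R i x) y = o (y i) (Rs (o x y))
}.

Definition pfun (A : Type) := {ffun 'I_n -> A} -> option A.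

Definition is_mcomp (A : Type) (f : pfun A) (g : 'I_n -> pfun A) (h : pfun A) : Prop :=
  forall a c, h a = Some c <->
    exists b : {ffun 'I_n -> A}, (forall j, g j a = Some (b j)) /\ f b = Some c.

Definition pproj (A : Type) (i : 'I_n) (f : pfun A) : pfun A :=
  fun a => if f a is Some _ then Some (a i) else None.

Definition is_rep (A : Type) (P : G -> pfun A) : Prop :=
  (forall x (y : {ffun 'I_n -> G}), is_mcomp (P x) (fun j => P (y j)) (P (o x y))) /\
  (forall i x a, P (R i x) a = pproj i (P x) a).

Definition stabilizer (H : G -> Prop) : Prop :=
  exists (A : Type) (P : G -> pfun A) (a : A),
    is_rep P /\ forall g, H g <-> P g [ffun=> a] = Some a.

Inductive Tn : (G -> G) -> Prop :=
  | Tn_id : Tn (fun x => x)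
  | Tn_op (a : G) (b : {ffun 'I_n -> G}) (i : 'I_n) (t : G -> G) :
      Tn t -> Tn (fun x => o a (upd b i (t x)))
  | Tn_R (i : 'I_n) (t : G -> G) : Tn t -> Tn (fun x => R i (t x)).

Definition quasi_stable (H : G -> Prop) : Prop :=
  forall x, H x -> H (o x [ffun=> x]).

Definition l_unitary (H : G -> Prop) : Prop :=
  forall x y, H (o x [ffun=> y]) -> H y -> H x.

Definition normal_vcomplex (H : G -> Prop) : Prop :=
  forall x y t, Tn t -> H x -> H y -> H (t x) -> H (t y).

Definition mle (x y : G) : Prop := x = o y (Rs x).

Definition C_H (H X : G -> Prop) : G -> Prop :=
  fun c => exists a b t, Tn t /\ (mle a b \/ (H a /\ H b)) /\
     o (t a) (Rs c) = t a /\ X a /\ X (t b).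

Definition C_Hm (H : G -> Prop) (m : nat) (X : G -> Prop) : G -> Prop :=
  iter m (C_H H) X.

Definition cond_A (H : G -> Prop) (m : nat) : Prop :=
  forall x y u (w : {ffun 'I_n -> G}) (i : 'I_n),
    x = o y (Rs x) -> C_Hm H m H x -> H (o u (upd w i y)) -> H (o u (upd w i x)).

End Menger.

(* Main.v *)
Require Import Defs.
From mathcomp Require Import all_boot.
From Stdlib Require Import ClassicalEpsilon FunctionalExtensionality PropExtensionality.
Set Implicit Arguments. Unset Strict Implicit. Unset Printing Implicit Defensive.

Section Alg.
Context (n : nat) (G : Type) (o : G -> {ffun 'I_n -> G} -> G) (R : 'I_n -> G -> G)
  (HG : menger_system o R).

Local Notation Rs := (Rs R).

Lemma RsE y k : Rs y k = R k y.
Proof. by rewrite /Rs ffunE. Qed.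

Lemma Rs_o x y : Rs (o x (Rs y)) = [ffun k => o (Rs x k) (Rs y)].
Proof. apply/ffunP=> k; rewrite !ffunE; exact: (A4 HG). Qed.

Lemma L_idem z e : o (o z (Rs e)) (Rs e) = o z (Rs e).
Proof.
rewrite (A1 HG); congr (o z); apply/ffunP=> j; rewrite !ffunE.
by rewrite -(A4 HG) (A2 HG).
Qed.

Lemma L1 x z j : o (o x z) (Rs (z j)) = o x z.
Proof.
set e := o x z.
have hR : Rs e = [ffun i => o (Rs (z j) i) (Rs e)].
  apply/ffunP=> i; rewrite !ffunE /e (A6 HG i j) (A7 HG) -/e.
  by rewrite (A4 HG).
rewrite -{2}(A2 HG e) hR -(A1 HG) (A5 HG) (A2 HG); done.
Qed.

Lemma L2 e z : o e (Rs (o z (Rs e))) = o e (Rs z).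
Proof. by rewrite Rs_o -(A1 HG) (A5 HG) (A2 HG). Qed.

Lemma M1 z w : mle o R (o z (Rs w)) z.
Proof. by rewrite /mle Rs_o -(A1 HG) (A2 HG). Qed.

Lemma M2 x y : mle o R x y -> o x (Rs y) = x.
Proof.
move=> hx; transitivity (o (o y (Rs x)) (Rs y)); first by rewrite -hx.
by rewrite (A5 HG) (A2 HG) -hx.
Qed.

Lemma Tn_mono t x y w : Tn o R t -> x = o y (Rs w) -> t x = o (t y) (Rs w).
Proof.
move=> ht hx; elim: ht => [|a b i t' _ IH|i t' _ IH] //=.
  by rewrite IH (A3 HG).
by rewrite IH (A4 HG).
Qed.

Lemma Tn_mle t x y : Tn o R t -> mle o R x y -> mle o R (t x) (t y).
Proof. move=> ht hx; rewrite (Tn_mono ht hx); exact: M1. Qed.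

Lemma Tn_comp s t : Tn o R s -> Tn o R t -> Tn o R (fun x => s (t x)).
Proof.
move=> hs ht; elim: hs => [|a b i t' _ IH|i t' _ IH] /=.
- exact: ht.
- exact: (Tn_op a b i IH).
- exact: (Tn_R i IH).
Qed.

Lemma Tn_ctx g w j : Tn o R (fun z => o g (upd w j z)).
Proof. exact: (Tn_op g w j (Tn_id o R)). Qed.

Lemma repl (Q : {ffun 'I_n -> G} -> Prop) (v v' : {ffun 'I_n -> G}) :
  (forall w j, Q (upd w j (v j)) -> Q (upd w j (v' j))) -> Q v -> Q v'.
Proof.
move=> step Qv.
pose mix m := [ffun j : 'I_n => if (j < m)%N then v' j else v j].
have h0 : mix 0 = v by apply/ffunP=> j; rewrite ffunE.
have hn : mix n = v' by apply/ffunP=> j; rewrite ffunE ltn_ord.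
suff: forall m, Q (mix m) by move/(_ n); rewrite hn.
elim=> [|m IH]; first by rewrite h0.
case: (ltnP m n) => hm.
- pose i := Ordinal hm.
  have e1 : mix m = upd (mix m) i (v i).
    apply/ffunP=> j; rewrite !ffunE; case: eqP => // ->; by rewrite /= ltnn.
  have e2 : mix m.+1 = upd (mix m) i (v' i).
    apply/ffunP=> j; rewrite !ffunE; case: eqP => [->|ne]; first by rewrite /= ltnSn.
    rewrite ltnS leq_eqVlt; case: eqP => // ej; exfalso; apply: ne; exact: val_inj.
  rewrite e2; apply: step; rewrite -e1; exact: IH.
- have -> : mix m.+1 = mix m.
    apply/ffunP=> j; rewrite !ffunE.
    have h1 : (j < m)%N by apply: leq_trans (ltn_ord j) hm.
    by rewrite h1 (ltn_trans h1 (ltnSn m)).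
  exact: IH.
Qed.


Lemma opt_ext (A : Type) (p q : option A) : (forall d, p = Some d <-> q = Some d) -> p = q.
Proof.
case: p => [d|] h; first by symmetry; apply/h.
case: q h => [d|] h //; by have := proj2 (h d) erefl.
Qed.

Section Nec.
Context (A : Type) (P : G -> pfun n A) (HP : is_rep o R P).

Lemma dep_op c u w i x y : P x c = P y c ->
  P (o u (upd w i x)) c = P (o u (upd w i y)) c.
Proof.
move=> hxy; apply: opt_ext => d.
rewrite (proj1 HP u (upd w i x) c d) (proj1 HP u (upd w i y) c d).
split=> -[b [hb hu]]; exists b; split=> // j; move: (hb j); rewrite !ffunE;
  case: eqP => // _; by rewrite hxy.
Qed.

Lemma dep_T c t x y : Tn o R t -> P x c = P y c -> P (t x) c = P (t y) c.
Proof.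
move=> ht hxy; elim: ht => [|a b i t' _ IH|i t' _ IH] //=.
- exact: dep_op.
- by rewrite !(proj2 HP) /pproj IH.
Qed.

Lemma restrict c x y d : P x c = Some d -> P (o y (Rs x)) c = P y c.
Proof.
move=> hx; apply: opt_ext => e; rewrite (proj1 HP y (Rs x) c e); split.
- move=> [b [hb hy]]; have -> : c = b; last by [].
  apply/ffunP=> j; move: (hb j); rewrite ffunE (proj2 HP) /pproj hx; by case.
- move=> hy; exists c; split=> // j; by rewrite ffunE (proj2 HP) /pproj hx.
Qed.

End Nec.

Lemma ffun_n0 (T : Type) (f g : {ffun 'I_n -> T}) : n = 0 -> f = g.
Proof. move=> n0; apply/ffunP=> j; have := ltn_ord j; move=> hj; exfalso; move: hj; move: (nat_of_ord j) => jj; by rewrite n0. Qed.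

Lemma necessity (H : G -> Prop) : stabilizer o R H ->
  [/\ quasi_stable o H, l_unitary o H, normal_vcomplex o R H,
      (forall i x, H x -> H (R i x)) &
      (forall m : nat, cond_A o R H m)].
Proof.
move=> [A [P [a [HP hH]]]].
set abar := [ffun=> a] : {ffun 'I_n -> A}.
have Pc := proj1 HP; have PR := proj2 HP.
split.
- move=> x hx; apply/hH; apply/(Pc x [ffun=> x] abar a); exists abar; split.
  + move=> j; rewrite !ffunE; exact/hH.
  + exact/hH.
- move=> x y /hH /(Pc x [ffun=> y] abar a) [b [hb hx]] /hH hy; apply/hH.
  change (P x abar = Some a).
  have -> : abar = b; last by [].
  apply/ffunP=> j; move: (hb j); rewrite !ffunE hy; by case.
- move=> x y t ht /hH hx /hH hy /hH htx; apply/hH; rewrite -htx.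
  apply: (dep_T HP) => //; by rewrite hx hy.
- move=> i x /hH hx; apply/hH; by rewrite PR /pproj hx ffunE.
- move=> m x y u w i hxy hC hu.
  case: (posnP n) => [n0|npos].
    have e : x = y by rewrite hxy (ffun_n0 (Rs x) (Rs y) n0) (A2 HG).
    by rewrite e.
  pose k := Ordinal npos.
  have dom : forall m c, C_Hm o R H m H c -> exists d, P c abar = Some d.
    elim=> [|m' IH] c.
      by move=> /hH hc; exists a.
    rewrite /C_Hm iterS -/(C_Hm o R H m' H).
    move=> [a' [b [t [ht [hab [hc [ha htb]]]]]]].
    have [d1 hd1] := IH _ ha; have [d2 hd2] := IH _ htb.
    have eab : P a' abar = P b abar.
      case: hab => [hab|[h1 h2]].
        have := restrict HP b hd1; by rewrite -hab.
      by rewrite (proj1 (hH _) h1) (proj1 (hH _) h2).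
    have := dep_T HP ht eab; rewrite hd2 => ht'.
    move: ht'; rewrite -{1}hc => /(Pc (t a') (Rs c) abar d2) [b' [hb' _]].
    move: (hb' k); rewrite ffunE PR /pproj.
    case: (P c abar) => [d|] // _; by exists d.
  have [d hd] := dom m x hC.
  have exy : P x abar = P y abar.
    have := restrict HP y hd; by rewrite -hxy.
  apply/hH; rewrite (dep_op HP u w i exy); exact/hH.
Qed.


Section Suff.
Context (H : G -> Prop) (h0 : G) (Hh0 : H h0)
  (hq : quasi_stable o H) (hl : l_unitary o H) (hv : normal_vcomplex o R H)
  (hR : forall i x, H x -> H (R i x)) (hA : forall m : nat, cond_A o R H m).

Definition W x := exists m, C_Hm o R H m H x.

Lemma C_incl X x : X x -> C_H o R H X x.
Proof.
move=> hx; exists x, x, (fun z => z); split; first exact: Tn_id.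
split; first by left; rewrite /mle (A2 HG).
by split; first exact: (A2 HG).
Qed.

Lemma C_mono m k x : C_Hm o R H m H x -> C_Hm o R H (k + m) H x.
Proof.
elim: k => [|k IH] // hx; rewrite addSn /C_Hm iterS; apply: C_incl; exact: IH.
Qed.

Lemma W_H x : H x -> W x.
Proof. by exists 0. Qed.

Lemma W_up e c : W e -> o e (Rs c) = e -> W c.
Proof.
move=> [m hm] he; exists m.+1; rewrite /C_Hm iterS.
exists e, e, (fun z => z); split; first exact: Tn_id.
split; first by left; rewrite /mle (A2 HG).
by [].
Qed.

Lemma W_trans t a b : Tn o R t -> W a -> W (t b) -> (mle o R a b \/ (H a /\ H b)) -> W (t a).
Proof.
move=> ht [m1 h1] [m2 h2] hab; exists (maxn m1 m2).+1; rewrite /C_Hm iterS.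
exists a, b, t; split=> //; split=> //; split; first exact: (A2 HG).
split.
- have := C_mono (maxn m1 m2 - m1) h1; by rewrite subnK // leq_maxl.
- have := C_mono (maxn m1 m2 - m2) h2; by rewrite subnK // leq_maxr.
Qed.

Lemma H_up x y : mle o R x y -> H x -> H y.
Proof.
move=> hxy hx; apply: (hl (y := x)) => //.
have h1 : H (o y (Rs x)) by rewrite -hxy.
apply: (repl (Q := fun w => H (o y w)) (v := Rs x)) h1 => w j.
rewrite !ffunE => hw. exact: (hv (Tn_ctx y w j) (hR j hx) hx hw).
Qed.

Lemma sat_down x y : mle o R x y -> W x -> H y -> H x.
Proof.
move=> hxy [m hm] hy.
case: (posnP n) => [n0|npos].
  by rewrite hxy (ffun_n0 (Rs x) (Rs y) n0) (A2 HG).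
pose k := Ordinal npos.
have h1 := hq (hR k hy).
have h2 : H (o (R k y) [ffun=> y]).
  apply: (repl (Q := fun w => H (o (R k y) w)) (v := [ffun=> R k y])) h1 => w j.
  rewrite !ffunE => hw; exact: (hv (Tn_ctx (R k y) w j) (hR k hy) hy hw).
have h3 : H (o (R k y) [ffun=> x]).
  apply: (repl (Q := fun w => H (o (R k y) w)) (v := [ffun=> y])) h2 => w j.
  rewrite !ffunE => hw; exact: (hA hxy hm hw).
move: h3; rewrite (A7 HG) ffunE; apply: H_up; exact: M1.
Qed.

Definition eps x z := W x /\ W z /\ forall t, Tn o R t ->
  (W (t x) <-> W (t z)) /\ (H (t x) <-> H (t z)).

Lemma eps_refl x : W x -> eps x x.
Proof. by move=> hx; split; last split. Qed.

Lemma eps_sym x z : eps x z -> eps z x.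
Proof.
move=> [hx [hz h]]; split=> //; split=> // t ht; have [h1 h2] := h t ht; by split; symmetry.
Qed.

Lemma eps_trans x y z : eps x y -> eps y z -> eps x z.
Proof.
move=> [hx [hy h]] [_ [hz h']]; split=> //; split=> // t ht.
have [h1 h2] := h t ht; have [h3 h4] := h' t ht; split; [rewrite h1 // | rewrite h2 //].
Qed.

Lemma eps_H p q : H p -> H q -> eps p q.
Proof.
move=> hp hq'; split; first exact: W_H; split; first exact: W_H.
move=> t ht; split; split.
- move=> hw; apply: (W_trans ht (W_H hq') hw); by right.
- move=> hw; apply: (W_trans ht (W_H hp) hw); by right.
- exact: hv.
- exact: hv.
Qed.

Lemma eps_le x y : mle o R x y -> W x -> W y -> eps x y.
Proof.
move=> hxy hx hy; split=> //; split=> // t ht.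
have hm := Tn_mle ht hxy.
have wy : W (t y) -> W (t x) by move=> hw; apply: (W_trans ht hx hw); left.
split; split=> //.
- move=> hw; apply: (W_up hw); exact: M2.
- exact: H_up.
- move=> hh; apply: sat_down hm (wy (W_H hh)) hh.
Qed.

Lemma eps_cong g (v v' : {ffun 'I_n -> G}) : (forall j, eps (v j) (v' j)) ->
  W (o g v) -> W (o g v') /\ eps (o g v) (o g v').
Proof.
move=> hv' hw.
apply: (repl (Q := fun w => W (o g w) /\ eps (o g v) (o g w)) (v := v)); last first.
  by split; last exact: eps_refl.
move=> w j [h1 h2].
have [_ [_ he]] := hv' j.
have ht := Tn_ctx g w j.
have [e1 _] := he _ ht.
have h3 : W (o g (upd w j (v' j))) by apply/e1.
split=> //; apply: (eps_trans h2); split=> //; split=> // s hs.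
exact: (he _ (Tn_comp hs ht)).
Qed.


Definition cls x : G -> Prop := fun z => eps x z.
Definition rep (c : {ffun 'I_n -> G -> Prop}) (v : {ffun 'I_n -> G}) :=
  forall j, W (v j) /\ c j = cls (v j).
Definition Pm (g : G) : pfun n (G -> Prop) := fun c =>
  if excluded_middle_informative (exists v, rep c v /\ W (o g v))
  then Some (fun z => exists v, rep c v /\ W (o g v) /\ eps (o g v) z) else None.

Lemma cls_eq x y : eps x y -> cls x = cls y.
Proof.
move=> hxy; apply: functional_extensionality => z; apply: propositional_extensionality.
split=> h; [exact: eps_trans (eps_sym hxy) h | exact: eps_trans hxy h].
Qed.

Lemma cls_inv x y : W y -> cls x = cls y -> eps x y.
Proof. move=> hy e; have : cls y y by exact: eps_refl. by rewrite -e. Qed.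

Lemma rep_eps c v v' : rep c v -> rep c v' -> forall j, eps (v j) (v' j).
Proof.
move=> h h' j; have [w1 e1] := h j; have [w2 e2] := h' j.
apply: (@cls_inv (v j) (v' j) w2); by rewrite -e1 -e2.
Qed.

Lemma PE_some c v g : rep c v -> W (o g v) -> Pm g c = Some (cls (o g v)).
Proof.
move=> hr hw; rewrite /Pm; destruct (excluded_middle_informative _) as [ex|nex]; last first.
  by exfalso; apply: nex; exists v.
congr Some; apply: functional_extensionality => z; apply: propositional_extensionality.
split.
- move=> [v' [hr' [hw' he]]]; apply: eps_trans he.
  exact: (eps_cong (rep_eps hr hr') hw).2.
- move=> he; by exists v.
Qed.

Lemma PE_none c v g : rep c v -> ~ W (o g v) -> Pm g c = None.
Proof.
move=> hr hw; rewrite /Pm; destruct (excluded_middle_informative _) as [[v' [hr' hw']]|] =>  //.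
exfalso; apply: hw.
exact: (eps_cong (fun j => eps_sym (rep_eps hr hr' j)) hw').1.
Qed.

Lemma Pm_rep c g d : Pm g c = Some d -> exists v, rep c v.
Proof.
rewrite /Pm; destruct (excluded_middle_informative _) as [[v [hv' hw0]]|] => //; by exists v.
Qed.

Lemma Pm_isrep : is_rep o R Pm.
Proof.
split.
- move=> x y c d.
  case: (classic (exists v, rep c v)) => [[v hr]|nr]; last first.
    split; first by move/Pm_rep.
    move=> [b [hb _]]; exfalso; apply: nr.
    have hj : forall j, exists u, W u /\ c j = cls u.
      move=> j; have [v hv'] := Pm_rep (hb j); exists (v j); exact: hv'.
    have [f hf] := fin_all_exists hj.
    exists [ffun j => f j] => j; rewrite ffunE; exact: hf.
  pose z := [ffun j => o (y j) v].
  have ez : o (o x y) v = o x z by rewrite (A1 HG).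
  split.
  + case: (classic (W (o x z))) => hw; last first.
      by rewrite (PE_none hr (g := o x y)) // ez.
    rewrite (PE_some hr (g := o x y)) ?ez // => -[<-].
    have wz : forall j, W (z j).
      move=> j; apply: (W_up hw); exact: L1.
    have hrb : rep [ffun j => cls (z j)] z by move=> j; rewrite [in X in X = _]ffunE; split; [exact: wz|].

    exists [ffun j => cls (z j)]; split.
    * move=> j; rewrite ffunE (PE_some hr) //; by have := wz j; rewrite ffunE.
    * exact: PE_some hrb hw.
  + move=> [b [hb hx]].
    have wz : forall j, W (z j) /\ b j = cls (z j).
      move=> j; have := hb j; rewrite ffunE.
      case: (classic (W (o (y j) v))) => hw; last by rewrite (PE_none hr hw).
      by rewrite (PE_some hr hw) => -[<-].
    have hrb : rep b z by move=> j; exact: wz.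
    case: (classic (W (o x z))) => hw; last by move: hx; rewrite (PE_none hrb hw).
    move: hx; rewrite (PE_some hrb hw) => -[<-].
    by rewrite (PE_some hr (g := o x y)) ?ez.
- move=> i x c.
  case: (classic (exists v, rep c v)) => [[v hr]|nr]; last first.
    rewrite /pproj.
    have e : forall g, Pm g c = None.
      move=> g; case ep: (Pm g c) => [d|] //; exfalso; apply: nr; exact: Pm_rep ep.
    by rewrite !e.
  rewrite /pproj.
  have ef : o (R i x) v = o (v i) (Rs (o x v)) by rewrite (A7 HG).
  set e := o x v in ef.
  have [wvi ci] := hr i.
  case: (classic (W e)) => hw.
    have wf : W (o (R i x) v).
      rewrite ef; apply: (W_up hw); rewrite L2; exact: L1.
    rewrite (PE_some hr hw) (PE_some hr wf) ci; congr Some; apply: cls_eq.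
    rewrite ef; apply: eps_le => //; [exact: M1 | by rewrite -ef].
  rewrite (PE_none hr hw) (PE_none hr) // => wf; apply: hw.
  move: wf; rewrite ef => wf; apply: (W_up wf); exact: L_idem.
Qed.

Lemma sufficiency : stabilizer o R H.
Proof.
exists (G -> Prop), Pm, (cls h0); split; first exact: Pm_isrep.
have hr : rep [ffun=> cls h0] [ffun=> h0].
  move=> j; rewrite !ffunE; split=> //; exact: W_H.
move=> g; split.
- move=> hg.
  have h1 : H (o g [ffun=> h0]).
    apply: (repl (Q := fun w => H (o g w)) (v := [ffun=> g])) (hq hg) => w j.
    rewrite !ffunE => hw; exact: (hv (Tn_ctx g w j) hg Hh0 hw).
  rewrite (PE_some hr (W_H h1)); congr Some; apply: cls_eq; exact: eps_H.
- case: (classic (W (o g [ffun=> h0]))) => hw; last by rewrite (PE_none hr hw).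
  rewrite (PE_some hr hw) => -[e].
  have := cls_inv (W_H Hh0) e => -[_ [_ he]].
  have [_ hh] := he _ (Tn_id o R).
  apply: (hl (y := h0)) => //; exact/hh.
Qed.

End Suff.

End Alg.

Theorem theorem3 (n : nat) (G : Type) (o : G -> {ffun 'I_n -> G} -> G)
  (R : 'I_n -> G -> G) (HG : menger_system o R)
  (H : G -> Prop) (Hne : exists h, H h) :
  stabilizer o R H <->
  [/\ quasi_stable o H, l_unitary o H, normal_vcomplex o R H,
      (forall i x, H x -> H (R i x)) &
      (forall m : nat, cond_A o R H m)].
Proof.
split; first exact: necessity.
case: Hne => h0 Hh0 [hq hl hv hR hA].
exact: (sufficiency HG Hh0 hq hl hv hR hA).
Qed.
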